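(* Let $S(x,y;t,v)=\sum_{w}x^{i(w)}y^{j(w)}t^{|w|}v^{\mathrm{vert}(w)}$, where the sum runs over all walks $w$ on the slit plane on the ordinary square lattice, $(i(w),j(w))$ is the endpoint, $|w|$ the length and $\mathrm{vert}(w)$ the number of vertical steps $(0,\pm1)$. Let $\delta_1=(1-2t(1+v))(1+2t(1-v))$ and $\delta_2=(1-2t(1-v))(1+2t(1+v))$. Then $$S(x,y;t,v)=\frac{\left(1-2t(v+\bar x)+\sqrt{\delta_1}\right)^{1/2}\left(1+2t(v-\bar x)+\sqrt{\delta_2}\right)^{1/2}}{2\left(1-t(x+\bar x+yv+\bar yv)\right)},$$ with radicals the power series in $t$ with positive constant term.
   Context: $\mathcal H=\{(k,0):k\le0\}$. A walk on the slit plane (ordinary square lattice) is a sequence $(w_0,\dots,w_n)$ in $\mathbb{Z}^2$ with $w_0=(0,0)$, $w_m-w_{m-1}\in\{(\pm1,0),(0,\pm1)\}$, and $w_m\notin\mathcal H$ for $1\le m\le n$. $\bar x=1/x$, $\bar y=1/y$. *)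

(* Defs.v *)
(* Formal power series in t are coefficient functions nat -> R. *)
From HB Require Import structures.
From mathcomp Require Import all_boot all_order all_algebra.
Set Implicit Arguments. Unset Strict Implicit. Unset Printing Implicit Defensive.
Import Order.TTheory GRing.Theory Num.Theory.
Local Open Scope ring_scope.

Definition step (s : 'I_4) : int * int :=
  match val s with
  | 0%N => (1, 0)
  | 1%N => (-1, 0)
  | 2%N => (0, 1)
  | _ => (0, -1)
  end.

Definition posx (w : seq 'I_4) : int := \sum_(s <- w) (step s).1.
Definition posy (w : seq 'I_4) : int := \sum_(s <- w) (step s).2.

Definition inH (w : seq 'I_4) : bool := (posy w == 0) && (posx w <= 0).

Definition slit_walk (w : seq 'I_4) : bool :=
  all (fun m => ~~ inH (take m w)) (iota 1 (size w)).

Definition vert (w : seq 'I_4) : nat := count (fun s : 'I_4 => 2 <= val s)%N w.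

Definition fps (R : Type) := nat -> R.

Definition fps_add (R : ringType) (f g : fps R) : fps R := fun n => f n + g n.
Definition fps_mul (R : ringType) (f g : fps R) : fps R :=
  fun n => \sum_(i < n.+1) f i * g (n - i)%N.
Definition fps_lin (R : ringType) (a b : R) : fps R :=
  fun n => if n == 0%N then a else if n == 1%N then b else 0.

Definition S_gf (R : unitRingType) (x y v : R) : fps R :=
  fun n => \sum_(w : n.-tuple 'I_4 | slit_walk w)
             x ^ posx w * y ^ posy w * v ^+ vert w.

Definition is_fps_sqrt (R : numDomainType) (f r : fps R) : Prop :=
  fps_mul r r = f /\ 0 < r 0%N.

Definition delta1 (R : ringType) (v : R) : fps R :=
  fps_mul (fps_lin 1 (-(2 * (1 + v)))) (fps_lin 1 (2 * (1 - v))).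
Definition delta2 (R : ringType) (v : R) : fps R :=
  fps_mul (fps_lin 1 (-(2 * (1 - v)))) (fps_lin 1 (2 * (1 + v))).

Definition radA (R : unitRingType) (x v : R) (r1 : fps R) : fps R :=
  fps_add (fps_lin 1 (-(2 * (v + x^-1)))) r1.
Definition radB (R : unitRingType) (x v : R) (r2 : fps R) : fps R :=
  fps_add (fps_lin 1 (2 * (v - x^-1))) r2.

Definition denom (R : unitRingType) (x y v : R) : fps R :=
  fps_lin 2 (-(2 * (x + x^-1 + y * v + y^-1 * v))).

(* Main.v *)
Require Import Defs.
From HB Require Import structures.
From mathcomp Require Import all_boot all_order all_algebra.
From mathcomp Require Import boolp.
From mathcomp Require Import ring lra.
Set Implicit Arguments. Unset Strict Implicit. Unset Printing Implicit Defensive.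
Import Order.TTheory GRing.Theory Num.Theory.
Local Open Scope ring_scope.
Section FpsRing.
Variable A : comNzRingType.

HB.instance Definition _ := gen_eqMixin (fps A).
HB.instance Definition _ := gen_choiceMixin (fps A).

Definition fzero : fps A := fun _ => 0.
Definition fopp (f : fps A) : fps A := fun n => - f n.
Definition fone : fps A := fun n => if n == 0%N then 1 else 0.

Lemma faddA : associative (@fps_add A).
Proof. by move=> f g h; apply: funext => n; rewrite /fps_add addrA. Qed.
Lemma faddC : commutative (@fps_add A).
Proof. by move=> f g; apply: funext => n; rewrite /fps_add addrC. Qed.
Lemma fadd0 : left_id fzero (@fps_add A).
Proof. by move=> f; apply: funext => n; rewrite /fps_add /fzero add0r. Qed.
Lemma faddN : left_inverse fzero fopp (@fps_add A).
Proof. by move=> f; apply: funext => n; rewrite /fps_add /fzero /fopp addNr. Qed.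

HB.instance Definition _ := GRing.isNmodule.Build (fps A) faddA faddC fadd0.
HB.instance Definition _ := GRing.Nmodule_isZmodule.Build (fps A) faddN.

Definition trunc (N : nat) (f : fps A) : {poly A} := \poly_(i < N) f i.

Lemma fmul_trunc (f g : fps A) n N : (n < N)%N ->
  fps_mul f g n = (trunc N f * trunc N g)`_n.
Proof.
move=> hn; rewrite coefM /fps_mul; apply: eq_bigr => i _.
rewrite !coef_poly; have hi := ltn_ord i.
have h1 : (i < N)%N by apply: leq_ltn_trans hn; rewrite -ltnS.
have h2 : (n - i < N)%N by apply: leq_ltn_trans hn; exact: leq_subr.
by rewrite h1 h2.
Qed.

Lemma trunc_coef N (f : fps A) n : (n < N)%N -> (trunc N f)`_n = f n.
Proof. by move=> h; rewrite coef_poly h. Qed.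

Lemma fmulA : associative (@fps_mul A).
Proof.
move=> f g h; apply: funext => n.
have E1 : fps_mul (fps_mul f g) h n =
   (trunc n.+1 f * trunc n.+1 g * trunc n.+1 h)`_n.
  rewrite coefM /fps_mul; apply: eq_bigr => i _.
  have hi := ltn_ord i.
  rewrite trunc_coef ?ltnS ?leq_subr // -(fmul_trunc _ _ hi) //.
have E2 : fps_mul f (fps_mul g h) n =
   (trunc n.+1 f * (trunc n.+1 g * trunc n.+1 h))`_n.
  rewrite coefM /fps_mul; apply: eq_bigr => i _.
  have hi := ltn_ord i.
  rewrite trunc_coef // -(fmul_trunc _ _ _) ?ltnS ?leq_subr //.
by rewrite E1 E2 mulrA.
Qed.

Lemma fmulC : commutative (@fps_mul A).
Proof.
move=> f g; apply: funext => n.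
by rewrite !(fmul_trunc _ _ (ltnSn n)) mulrC.
Qed.

Lemma fmul1 : left_id fone (@fps_mul A).
Proof.
move=> f; apply: funext => n.
rewrite /fps_mul big_ord_recl /fone /= mul1r subn0 big1 ?addr0 //.
by move=> i _; rewrite /bump /= mul0r.
Qed.

Lemma fmulDl : left_distributive (@fps_mul A) (@fps_add A).
Proof.
move=> f g h; apply: funext => n.
by rewrite /fps_mul /fps_add -big_split; apply: eq_bigr => i _; rewrite mulrDl.
Qed.

Lemma fone_neq0 : fone != fzero.
Proof.
apply/eqP => /(congr1 (fun f => f 0%N)); rewrite /fone /fzero /=.
by move/eqP; rewrite oner_eq0.
Qed.

HB.instance Definition _ := GRing.Zmodule_isComNzRing.Build (fps A)
  fmulA fmulC fmul1 fmulDl fone_neq0.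

End FpsRing.

Section FpsBasics.
Variable A : comNzRingType.
Implicit Types f g h : fps A.

Definition fC (c : A) : fps A := fun n => if n == 0%N then c else 0.
Definition tX : fps A := fun n => if n == 1%N then 1 else 0.

Lemma fpsE f g : (forall n, f n = g n) -> f = g.
Proof. by move=> h; apply: funext. Qed.

Lemma coefD f g n : (f + g) n = f n + g n. Proof. by []. Qed.
Lemma coefN f n : (- f) n = - f n. Proof. by []. Qed.
Lemma coefB f g n : (f - g) n = f n - g n. Proof. by []. Qed.
Lemma coef0f n : (0 : fps A) n = 0. Proof. by []. Qed.
Lemma coef1f n : (1 : fps A) n = if n == 0%N then 1 else 0. Proof. by []. Qed.
Lemma coefMf f g n : (f * g) n = \sum_(i < n.+1) f i * g (n - i)%N.
Proof. by []. Qed.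

Lemma coefM0 f g : (f * g) 0%N = f 0%N * g 0%N.
Proof. by rewrite coefMf big_ord1. Qed.

Lemma coefCM c f n : (fC c * f) n = c * f n.
Proof.
rewrite coefMf big_ord_recl /fC /= subn0 big1 ?addr0 //.
by move=> i _; rewrite mul0r.
Qed.

Lemma coeftM f n : (tX * f) n = if n is m.+1 then f m else 0.
Proof.
case: n => [|m]; first by rewrite coefM0 /tX mul0r.
rewrite coefMf big_ord_recl /tX /= mul0r add0r big_ord_recl /= subSS subn0 mul1r.
by rewrite big1 ?addr0 // => i _; rewrite mul0r.
Qed.

Lemma fC_add a b : fC (a + b) = fC a + fC b.
Proof. by apply: fpsE => n; rewrite coefD /fC; case: (n == 0%N); rewrite ?addr0. Qed.
Lemma fC_mul a b : fC (a * b) = fC a * fC b.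
Proof. by apply: fpsE => n; rewrite coefCM /fC; case: (n == 0%N); rewrite ?mulr0. Qed.
Lemma fC_opp a : fC (- a) = - fC a.
Proof. by apply: fpsE => n; rewrite coefN /fC; case: (n == 0%N); rewrite ?oppr0. Qed.
Lemma fC1 : fC 1 = 1. Proof. by []. Qed.
Lemma fC0 : fC 0 = 0.
Proof. by apply: fpsE => n; rewrite /fC; case: (n == 0%N). Qed.
Lemma fC_nat k : fC k%:R = k%:R.
Proof.
elim: k => [|k IH]; first by rewrite fC0.
by rewrite -addn1 !natrD fC_add IH.
Qed.

Lemma fps_linE a b : fps_lin a b = fC a + fC b * tX.
Proof.
apply: fpsE => n; rewrite coefD mulrC coeftM /fps_lin /fC.
by case: n => [|[|m]] //=; rewrite ?addr0 ?add0r.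
Qed.

Lemma fps_mulE f g : fps_mul f g = f * g. Proof. by []. Qed.
Lemma fps_addE f g : fps_add f g = f + g. Proof. by []. Qed.

Definition causal (Phi : fps A -> fps A) :=
  forall f g n, (forall i, (i < n)%N -> f i = g i) -> Phi f n = Phi g n.

Definition fixp (Phi : fps A -> fps A) : fps A := fun n => iter n.+1 Phi 0 n.

Lemma iter_agree Phi : causal Phi ->
  forall m m' i, (i < m)%N -> (i < m')%N -> iter m Phi 0 i = iter m' Phi 0 i.
Proof.
move=> hc; elim=> [|m IH] [|m'] i //= him him'.
apply: hc => j hj; apply: IH.
  by apply: leq_trans hj _; rewrite -ltnS.
by apply: leq_trans hj _; rewrite -ltnS.
Qed.

Lemma fixpE Phi : causal Phi -> fixp Phi = Phi (fixp Phi).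
Proof.
move=> hc; apply: fpsE => n; rewrite /fixp /=.
apply: (hc) => i hi.
by rewrite (iter_agree hc (m' := i.+1)).
Qed.

Lemma fixp_unique Phi f : causal Phi -> f = Phi f -> f = fixp Phi.
Proof.
move=> hc hf; have hfx := fixpE hc; apply: fpsE => n.
elim: n {-2}n (leqnn n) => [|N IH] n hn.
  rewrite hf hfx; apply: hc => i; by rewrite leqn0 in hn; rewrite (eqP hn).
rewrite hf hfx; apply: hc => i hi; apply: IH.
by rewrite -ltnS (leq_trans hi hn).
Qed.

Definition finvPhi f (ia : A) (g : fps A) : fps A := fun n =>
  if n is m.+1 then - ia * \sum_(i < m.+1) f i.+1 * g (m - i)%N else ia.

Lemma finvPhi_causal f ia : causal (finvPhi f ia).
Proof.
move=> g1 g2 [|m] h //=; congr (_ * _); apply: eq_bigr => i _.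
by rewrite h // ltnS leq_subr.
Qed.

Definition finv f ia := fixp (finvPhi f ia).

Lemma finvP f ia : f 0%N * ia = 1 -> f * finv f ia = 1.
Proof.
move=> hia; have E := fixpE (finvPhi_causal f ia).
apply: fpsE => n; rewrite coefMf coef1f.
case: n => [|m]; first by rewrite big_ord1 /finv E /= hia.
rewrite big_ord_recl /= subn0 /finv {1}E /=.
rewrite mulrA mulrN hia mulN1r addNr.
done.
Qed.

Lemma unit_cancel f g h : f * g = 1 -> h * f = 0 -> h = 0.
Proof. by move=> hg hh; rewrite -[h]mulr1 -hg mulrA hh mul0r. Qed.

Definition fsqrtPhi f (a ib : A) (r : fps A) : fps A := fun n =>
  if n is m.+1 then ib * (f m.+1 - \sum_(i < m) r i.+1 * r (m - i)%N) else a.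

Lemma fsqrtPhi_causal f a ib : causal (fsqrtPhi f a ib).
Proof.
move=> g1 g2 [|m] h //=; congr (_ * (_ - _)); apply: eq_bigr => i _.
by rewrite !h // ltnS ?leq_subr //.
Qed.

Definition fsqrt f a ib := fixp (fsqrtPhi f a ib).

Lemma fsqrt0 f a ib : fsqrt f a ib 0%N = a.
Proof. by rewrite /fsqrt fixpE //; apply: fsqrtPhi_causal. Qed.

Lemma fsqrtP f a ib : a * a = f 0%N -> (a *+ 2) * ib = 1 ->
  fsqrt f a ib * fsqrt f a ib = f.
Proof.
move=> ha hib; have E := fixpE (fsqrtPhi_causal f a ib).
apply: fpsE => n; rewrite coefMf.
case: n => [|m]; first by rewrite big_ord1 fsqrt0.
rewrite big_ord_recl big_ord_recr /= subn0 subnn fsqrt0.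
have -> : \sum_(i < m) fsqrt f a ib (bump 0 (widen_ord (leqnSn m) i))
            * fsqrt f a ib (m.+1 - bump 0 (widen_ord (leqnSn m) i))%N
        = \sum_(i < m) fsqrt f a ib i.+1 * fsqrt f a ib (m - i)%N.
  by apply: eq_bigr => i _; rewrite /bump /= add1n subSS.
set S := \sum_(i < m) _.
have Em : fsqrt f a ib m.+1 = ib * (f m.+1 - S) by rewrite /fsqrt {1}E.
rewrite /bump /= add1n Em.
have -> : a * (ib * (f m.+1 - S)) + (S + ib * (f m.+1 - S) * a)
   = (a *+ 2 * ib) * (f m.+1 - S) + S by rewrite mulr2n; ring.
by rewrite hib mul1r subrK.
Qed.

End FpsBasics.
Section Walks.

Lemma posx_rcons w s : posx (rcons w s) = posx w + (step s).1.
Proof. by rewrite /posx -cats1 big_cat big_seq1. Qed.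
Lemma posy_rcons w s : posy (rcons w s) = posy w + (step s).2.
Proof. by rewrite /posy -cats1 big_cat big_seq1. Qed.
Lemma vert_rcons w s : vert (rcons w s) = (vert w + (2 <= val s))%N.
Proof. by rewrite /vert -cats1 count_cat /= addn0. Qed.

Lemma slit_rcons w s :
  slit_walk (rcons w s) = slit_walk w && ~~ inH (rcons w s).
Proof.
rewrite /slit_walk size_rcons -[(size w).+1]addn1 iotaD all_cat /= andbT add1n.
congr (_ && _); last by rewrite -[in LHS](size_rcons w s) take_size.
apply: eq_in_all => m; rewrite mem_iota => /andP[_ hm].
by rewrite -cats1 takel_cat // -ltnS -[(size w).+1]add1n.
Qed.

Lemma slit_nil : slit_walk [::]. Proof. by []. Qed.

Lemma slit_posx w : slit_walk w -> posy w = 0 -> (0 < size w)%N -> 0 < posx w.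
Proof.
move=> /allP h hy hs; have := h (size w); rewrite mem_iota add1n ltnSn hs.
by rewrite take_size /inH hy eqxx /= -ltNge => /(_ isT).
Qed.

Lemma inH_posx w : inH w -> posx w <= 0.
Proof. by case/andP. Qed.
Lemma inH_posy w : inH w -> posy w = 0.
Proof. by case/andP => /eqP. Qed.

Lemma tuple0E (T : Type) (t : 0.-tuple T) : t = [tuple].
Proof. by apply: val_inj; case: t => [[]]. Qed.

Variable R : comNzRingType.

Lemma sum_tuple_rcons n (G : seq 'I_4 -> R) :
  \sum_(t : n.+1.-tuple 'I_4) G t =
  \sum_(t : n.-tuple 'I_4) \sum_(s : 'I_4) G (rcons t s).
Proof.
rewrite pair_big /=.
pose f := fun p : n.-tuple 'I_4 * 'I_4 => [tuple of rcons p.1 p.2].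
pose g := fun t : n.+1.-tuple 'I_4 =>
  ([tuple of belast (thead t) (behead t)] : n.-tuple 'I_4, last (thead t) (behead t)).
have fg : cancel g f.
  move=> t; apply: val_inj => /=.
  by case: t => [[|a l] hs] //=; rewrite -lastI.
have gf : cancel f g.
  move=> [t s]; have := fg (f (t, s)).
  case E: (g (f (t, s))) => [t' s'] /(congr1 val) /= /rcons_inj [h1 ->].
  by congr (_, _); apply: val_inj.
rewrite (reindex f) /=; last by exists g => p _.
by apply: eq_bigr => p _.
Qed.

Lemma sum_ext n (F : seq 'I_4 -> R) :
  \sum_(w : n.+1.-tuple 'I_4 | slit_walk w) F w =
  \sum_(w : n.-tuple 'I_4 | slit_walk w)
     \sum_(s : 'I_4 | ~~ inH (rcons w s)) F (rcons w s).
Proof.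
rewrite big_mkcond (sum_tuple_rcons n (fun t => if slit_walk t then F t else 0)).
rewrite [RHS]big_mkcond; apply: eq_bigr => w _.
rewrite /=; case hw: (slit_walk w); last first.
  by apply: big1 => s _; rewrite slit_rcons hw.
rewrite [RHS]big_mkcond; apply: eq_bigr => s _.
by rewrite slit_rcons hw.
Qed.

Lemma sum_ext2 n (F : seq 'I_4 -> R) :
  \sum_(w : n.+1.-tuple 'I_4 | slit_walk w) F w =
  \sum_(w : n.-tuple 'I_4 | slit_walk w) \sum_(s : 'I_4) F (rcons w s)
  - \sum_(w : n.-tuple 'I_4 | slit_walk w)
     \sum_(s : 'I_4 | inH (rcons w s)) F (rcons w s).
Proof.
rewrite sum_ext; apply/eqP; rewrite eq_sym subr_eq -big_split /=; apply/eqP.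
apply: eq_bigr => w _.
rewrite [\sum_(s : 'I_4) F (rcons w s)](bigID (fun s => inH (rcons w s))) /=.
by rewrite addrC.
Qed.

Lemma sum_tuple0 (F : seq 'I_4 -> R) :
  \sum_(w : 0.-tuple 'I_4 | slit_walk w) F w = F [::].
Proof.
rewrite (eq_bigl (pred1 [tuple])) ?big_pred1_eq //.
by move=> t; rewrite (tuple0E t) /= eqxx.
Qed.



End Walks.
Arguments tX {A}.
Section MoreCoef.
Variable A : comNzRingType.
Lemma coefCtM (c : A) f n : (fC c * tX * f) n.+1 = c * f n.
Proof. by rewrite -mulrA coefCM coeftM. Qed.
Lemma coefCtM0 (c : A) f : (fC c * tX * f) 0%N = 0.
Proof. by rewrite -mulrA coefCM coeftM mulr0. Qed.
Lemma coefX0 (f : fps A) j : (f ^+ j) 0%N = (f 0%N) ^+ j.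
Proof. by elim: j => [|j IH]; rewrite ?expr0 // !exprS coefM0 IH. Qed.
Lemma if_nat (b : bool) (e : A) : (if b then e else 0) = b%:R * e.
Proof. by case: b; rewrite ?mul1r ?mul0r. Qed.
End MoreCoef.

Lemma addr_eq_sub (a b c : int) : (a + b == c) = (a == c - b).
Proof. exact: (can2_eq (addrK b) (subrK b)). Qed.

Section Numeric.
Variables (R : rcfType) (x v : R).
Hypothesis hx : x != 0.

Definition wt (w : seq 'I_4) : R := x ^ posx w * v ^+ vert w.
Definition Sj (j : int) : fps R := fun n =>
  \sum_(w : n.-tuple 'I_4 | slit_walk w && (posy w == j)) wt w.
Definition Rc : fps R := fun n =>
  if n is m.+1 then
    - \sum_(w : m.-tuple 'I_4 | slit_walk w)
         \sum_(s : 'I_4 | inH (rcons w s)) wt (rcons w s)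
  else 1.

Lemma xm1 : x ^ (-1) = x^-1.
Proof. by rewrite -exprz_inv expr1z. Qed.

Lemma wt_rcons w s :
  wt (rcons w s) = wt w * (x ^ (step s).1 * v ^+ (2 <= val s)).
Proof. by rewrite /wt posx_rcons vert_rcons expfzDr // exprD; ring. Qed.

Lemma step_sum w j :
  \sum_(s : 'I_4) (if posy (rcons w s) == j then wt (rcons w s) else 0) =
  wt w * ((posy w == j)%:R * (x + x^-1) + (posy w == j - 1)%:R * v
          + (posy w == j + 1)%:R * v).
Proof.
rewrite !big_ord_recl big_ord0 /= !posy_rcons !wt_rcons /step /=.
rewrite !addr_eq_sub !subr0 opprK xm1 expr1z !if_nat; ring.
Qed.

Lemma Sj0 j : Sj j 0%N = (j == 0)%:R.
Proof.
rewrite /Sj big_mkcondr (sum_tuple0 (fun w => if posy w == j then wt w else 0)).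
rewrite /= /posy big_nil eq_sym.
by rewrite if_nat /wt /posx big_nil expr0z mul1r expr0 mulr1.
Qed.

Lemma Sj_rec j n : Sj j n.+1 =
  (x + x^-1) * Sj j n + v * (Sj (j - 1) n + Sj (j + 1) n)
  + (if j == 0 then Rc n.+1 else 0).
Proof.
rewrite /Sj big_mkcondr (sum_ext2 n (fun w => if posy w == j then wt w else 0)) /=.
have -> : \sum_(w : n.-tuple 'I_4 | slit_walk w)
      \sum_(s : 'I_4) (if posy (rcons w s) == j then wt (rcons w s) else 0)
   = \sum_(w : n.-tuple 'I_4 | slit_walk w)
      wt w * ((posy w == j)%:R * (x + x^-1) + (posy w == j - 1)%:R * v
          + (posy w == j + 1)%:R * v).
  by apply: eq_bigr => w _; rewrite step_sum.
have -> : \sum_(w : n.-tuple 'I_4 | slit_walk w)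
     \sum_(s : 'I_4 | inH (rcons w s))
        (if posy (rcons w s) == j then wt (rcons w s) else 0)
   = (j == 0)%:R * \sum_(w : n.-tuple 'I_4 | slit_walk w)
     \sum_(s : 'I_4 | inH (rcons w s)) wt (rcons w s).
  rewrite mulr_sumr; apply: eq_bigr => w _; rewrite mulr_sumr.
  by apply: eq_bigr => s hs; rewrite (inH_posy hs) eq_sym if_nat.
have -> : \sum_(w : n.-tuple 'I_4 | slit_walk w)
      wt w * ((posy w == j)%:R * (x + x^-1) + (posy w == j - 1)%:R * v
          + (posy w == j + 1)%:R * v)
   = (x + x^-1) * Sj j n + v * (Sj (j - 1) n + Sj (j + 1) n).
  rewrite /Sj !big_mkcondr -big_split !mulr_sumr -big_split /=.
  by apply: eq_bigr => w _; rewrite !if_nat; ring.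
case: (eqVneq j 0) => hj.
  by rewrite /Rc hj /= mul1r.
by rewrite mul0r subr0 addr0.
Qed.

Definition U : fps R := fC (x + x^-1) * tX.
Definition V : fps R := fC v * tX.

Lemma Sj_fps j :
  Sj j = U * Sj j + V * (Sj (j - 1) + Sj (j + 1)) + (if j == 0 then Rc else 0).
Proof.
apply: fpsE => -[|n]; rewrite !coefD /U /V.
  by rewrite !coefCtM0 Sj0 !add0r; case: (eqVneq j 0) => hj.
rewrite !coefCtM Sj_rec; case: (eqVneq j 0) => hj //.
Qed.

Definition betaPhi (b : fps R) : fps R := fun n =>
  if n is m.+1 then (x + x^-1) * b m + v * (1 + b * b) m else 0.

Lemma betaPhi_causal : causal betaPhi.
Proof.
move=> f g [|m] h //=; rewrite !coefD !coefMf h //.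
congr (_ + _ * (_ + _)); apply: eq_bigr => i _.
by rewrite !h // ltnS ?leq_subr // -ltnS.
Qed.

Definition beta := fixp betaPhi.

Lemma betaE : beta = U * beta + V * (1 + beta * beta).
Proof.
have E := fixpE betaPhi_causal; rewrite -/beta in E.
apply: fpsE => -[|n]; rewrite coefD /U /V.
  by rewrite !coefCtM0 E addr0.
by rewrite !coefCtM {1}E.
Qed.

Lemma beta0 : beta 0%N = 0.
Proof. by rewrite /beta fixpE //; apply: betaPhi_causal. Qed.

Lemma decay (D : nat -> fps R) : (forall j, D j 0%N = 0) -> D 0%N = 0 ->
  (forall j, D j.+1 = U * D j.+1 + V * (D j + D j.+2)) -> forall j, D j = 0.
Proof.
move=> h0 hD0 hrec.
suff H : forall n j, D j n = 0 by move=> j; apply: fpsE => n; rewrite H.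
elim=> [|n IH] j; first exact: h0.
case: j => [|j]; first by rewrite hD0.
by rewrite hrec coefD /U /V !coefCtM coefD !IH addr0 !mulr0 addr0.
Qed.

Lemma Sj_pos j : Sj j%:Z = Sj 0 * beta ^+ j.
Proof.
pose D : nat -> fps R := fun j : nat => Sj j%:Z - Sj 0 * beta ^+ j.
suff H : forall j, D j = 0 by apply/eqP; rewrite -subr_eq0; apply/eqP; exact: (H j).
apply: decay.
- move=> k; rewrite /D coefB coefM0 coefX0 beta0 !Sj0 expr0n eqxx mul1r.
  by rewrite -[k%:Z == 0]/(k == 0%N) subrr.
- by rewrite /D expr0 mulr1 subrr.
move=> k; rewrite /D.
have E1 := Sj_fps k.+1%:Z.
have e1 : k.+1%:Z - 1 = k%:Z by rewrite -addn1 PoszD addrK.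
have e2 : k.+1%:Z + 1 = k.+2%:Z by rewrite -[k.+2]addn1 PoszD.
rewrite e1 e2 -[k.+1%:Z == 0]/(k.+1 == 0%N) /= addr0 in E1.
have hb := betaE.
have Y : Sj 0 * beta ^+ k.+1 = U * (Sj 0 * beta ^+ k.+1)
   + V * (Sj 0 * beta ^+ k + Sj 0 * beta ^+ k.+2)
   + Sj 0 * beta ^+ k * (beta - (U * beta + V * (1 + beta * beta))).
  rewrite !exprS; ring.
rewrite -hb subrr mulr0 addr0 in Y.
rewrite {1}E1 {1}Y; ring.
Qed.

Lemma Sj_neg j : Sj (- j%:Z) = Sj 0 * beta ^+ j.
Proof.
pose D : nat -> fps R := fun j : nat => Sj (- j%:Z) - Sj 0 * beta ^+ j.
suff H : forall j, D j = 0 by apply/eqP; rewrite -subr_eq0; apply/eqP; exact: (H j).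
apply: decay.
- move=> k; rewrite /D coefB coefM0 coefX0 beta0 !Sj0 expr0n eqxx mul1r.
  by rewrite oppr_eq0 -[k%:Z == 0]/(k == 0%N) subrr.
- by rewrite /D expr0 mulr1 oppr0 subrr.
move=> k; rewrite /D.
have E1 := Sj_fps (- k.+1%:Z).
have e1 : - k.+1%:Z - 1 = - k.+2%:Z.
  by rewrite -[k.+2]addn1 PoszD opprD -addn1 PoszD.
have e2 : - k.+1%:Z + 1 = - k%:Z by rewrite -addn1 PoszD opprD addrNK.
rewrite e1 e2 oppr_eq0 -[k.+1%:Z == 0]/(k.+1 == 0%N) /= addr0 in E1.
have hb := betaE.
have Y : Sj 0 * beta ^+ k.+1 = U * (Sj 0 * beta ^+ k.+1)
   + V * (Sj 0 * beta ^+ k + Sj 0 * beta ^+ k.+2)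
   + Sj 0 * beta ^+ k * (beta - (U * beta + V * (1 + beta * beta))).
  rewrite !exprS; ring.
rewrite -hb subrr mulr0 addr0 in Y.
rewrite {1}E1 {1}Y; ring.
Qed.

Definition rho : fps R := 1 - U - 2%:R * V * beta.

Lemma Rc_rho : Rc = Sj 0 * rho.
Proof.
have E := Sj_fps 0; rewrite eqxx sub0r add0r in E.
have h1 := Sj_pos 1; have h2 := Sj_neg 1.
rewrite h1 h2 expr1 in E.
have -> : Rc = Sj 0 - (U * Sj 0 + V * (Sj 0 * beta + Sj 0 * beta)).
  rewrite {1}E; ring.
rewrite /rho; ring.
Qed.

Lemma rho_sq : rho * rho = (1 - U) ^+ 2 - 4%:R * V ^+ 2.
Proof.
have hb := betaE.
have -> : rho * rho = (1 - U) ^+ 2 - 4%:R * V ^+ 2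
   + 4%:R * V * (U * beta + V * (1 + beta * beta) - beta).
  rewrite /rho; ring.
by rewrite -hb subrr mulr0 addr0.
Qed.

Lemma rho0 : rho 0%N = 1.
Proof.
by rewrite /rho !coefB /U /V !coefM0 beta0 !mulr0 /tX /= !subr0.
Qed.

End Numeric.
Section Eval.
Variable R : rcfType.

Definition evP (p : fps {poly R}) (z : R) : fps R := fun n => (p n).[z].
Definition liftP (c : fps R) : fps {poly R} := fun n => (c n)%:P.

Lemma evP_mul p q z : evP (p * q) z = evP p z * evP q z.
Proof.
apply: fpsE => n; rewrite /evP !coefMf horner_sum.
by apply: eq_bigr => i _; rewrite hornerM.
Qed.
Lemma evP_add p q z : evP (p + q) z = evP p z + evP q z.
Proof. by apply: fpsE => n; rewrite /evP coefD hornerD. Qed.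
Lemma evP_opp p z : evP (- p) z = - evP p z.
Proof. by apply: fpsE => n; rewrite /evP coefN hornerN. Qed.
Lemma evP_sub p q z : evP (p - q) z = evP p z - evP q z.
Proof. by rewrite evP_add evP_opp. Qed.
Lemma evP_one z : evP 1 z = 1.
Proof. by apply: fpsE => -[|n]; rewrite /evP /= ?hornerC. Qed.
Lemma evP_lift c z : evP (liftP c) z = c.
Proof. by apply: fpsE => n; rewrite /evP /liftP hornerC. Qed.
Lemma evP_tX z : evP tX z = tX.
Proof. by apply: fpsE => -[|[|n]]; rewrite /evP /tX /= hornerC. Qed.
Lemma evP_fC c z : evP (fC c) z = fC c.[z].
Proof. by apply: fpsE => -[|n]; rewrite /evP /fC /= ?hornerC. Qed.
Lemma liftP_mul a b : liftP (a * b) = liftP a * liftP b.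
Proof.
apply: fpsE => n; rewrite /liftP !coefMf rmorph_sum /=.
by apply: eq_bigr => i _; rewrite polyCM.
Qed.
Lemma liftP_add a b : liftP (a + b) = liftP a + liftP b.
Proof. by apply: fpsE => n; rewrite /liftP coefD polyCD. Qed.
Lemma liftP_opp a : liftP (- a) = - liftP a.
Proof. by apply: fpsE => n; rewrite /liftP coefN polyCN. Qed.
Lemma liftP_one : liftP 1 = 1.
Proof. by apply: fpsE => -[|n]; rewrite /liftP. Qed.
Lemma liftP_tX : liftP tX = tX.
Proof. by apply: fpsE => -[|[|n]]. Qed.

Variable v : R.

Definition Shat : fps {poly R} := fun n =>
  \sum_(w : n.-tuple 'I_4 | slit_walk w && (posy w == 0))
     'X^(absz (posx w)) * (v ^+ vert w)%:P.

Definition Rhat : fps {poly R} := fun n =>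
  if n is m.+1 then
    - \sum_(w : m.-tuple 'I_4 | slit_walk w)
         \sum_(s : 'I_4 | inH (rcons w s))
            'X^(absz (posx (rcons w s))) * (v ^+ vert (rcons w s))%:P
  else 1.

Lemma pos_expz (z : R) (a : int) : 0 <= a -> z ^ a = z ^+ absz a.
Proof. by move=> h; rewrite -{1}(gez0_abs h). Qed.

Lemma neg_expz (z : R) (a : int) : a <= 0 -> z ^ a = z^-1 ^+ absz a.
Proof.
move=> h; rewrite exprnP exprz_inv.
by rewrite (lez0_abs h) opprK.
Qed.

Lemma slit_posx0 (w : seq 'I_4) : slit_walk w -> posy w = 0 -> 0 <= posx w.
Proof.
move=> hs hy; case: (posnP (size w)) => hz.
  by move/eqP: hz; rewrite size_eq0 => /eqP ->; rewrite /posx big_nil.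
exact: ltW (slit_posx hs hy hz).
Qed.

Lemma Shat_ev z : evP Shat z = Sj z v 0.
Proof.
apply: fpsE => n; rewrite /evP /Shat /Sj horner_sum; apply: eq_bigr => w.
case/andP => hs /eqP hy.
by rewrite hornerM hornerXn hornerC /wt pos_expz // slit_posx0.
Qed.

Lemma Shat_ev0 : evP Shat 0 = 1.
Proof.
apply: fpsE => n; rewrite /evP /Shat horner_sum.
case: n => [|n].
  rewrite big_mkcondr (sum_tuple0 (fun w => if posy w == 0 then
      ('X^(absz (posx w)) * (v ^+ vert w)%:P).[0] else 0)) /=.
  by rewrite /posy /posx !big_nil /= hornerM hornerC mulr1.
rewrite coef1f /=; apply: big1 => w /andP[hs /eqP hy].
rewrite hornerM hornerXn expr0n.
have := slit_posx hs hy; rewrite size_tuple => /(_ isT) hp.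
by rewrite absz_eq0 gt_eqF // mul0r.
Qed.

Lemma Rhat_ev z : z != 0 -> evP Rhat z^-1 = Rc z v.
Proof.
move=> hz; apply: fpsE => -[|n]; rewrite /evP /Rhat /Rc ?hornerC //.
rewrite hornerN horner_sum; congr (- _); apply: eq_bigr => w _.
rewrite horner_sum; apply: eq_bigr => s hs.
by rewrite hornerM hornerXn hornerC /wt (neg_expz _ (inH_posx hs)).
Qed.

End Eval.
Section Sgf.
Variables (R : rcfType) (x y v : R).
Hypotheses (hx : x != 0) (hy : y != 0).

Definition wt3 (w : seq 'I_4) : R := x ^ posx w * y ^ posy w * v ^+ vert w.

Lemma wt3_rcons w s : wt3 (rcons w s) =
  wt3 w * (x ^ (step s).1 * y ^ (step s).2 * v ^+ (2 <= val s)).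
Proof.
rewrite /wt3 posx_rcons posy_rcons vert_rcons !expfzDr // exprD; ring.
Qed.

Lemma ym1 : y ^ (-1) = y^-1.
Proof. by rewrite -exprz_inv expr1z. Qed.

Lemma wt3_steps w : \sum_(s : 'I_4) wt3 (rcons w s) =
  wt3 w * (x + x^-1 + y * v + y^-1 * v).
Proof.
rewrite !big_ord_recl big_ord0 /= !wt3_rcons /step /=.
rewrite (xm1 x) ym1 !expr1z !expr0z; ring.
Qed.

Lemma wt3_inH w : inH w -> wt3 w = wt x v w.
Proof. by move=> h; rewrite /wt3 /wt (inH_posy h) expr0z mulr1. Qed.

Lemma S_gf0 : S_gf x y v 0%N = 1.
Proof.
rewrite /S_gf (sum_tuple0 (fun w => x ^ posx w * y ^ posy w * v ^+ vert w)).
by rewrite /posx /posy !big_nil /= !expr0z expr0 !mulr1.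
Qed.

Lemma S_gfS n : S_gf x y v n.+1 =
  (x + x^-1 + y * v + y^-1 * v) * S_gf x y v n + Rc x v n.+1.
Proof.
rewrite /S_gf (sum_ext2 n wt3) /Rc.
have -> : \sum_(w : n.-tuple 'I_4 | slit_walk w)
      \sum_(s : 'I_4 | inH (rcons w s)) wt3 (rcons w s)
  = \sum_(w : n.-tuple 'I_4 | slit_walk w)
      \sum_(s : 'I_4 | inH (rcons w s)) wt x v (rcons w s).
  by apply: eq_bigr => w _; apply: eq_bigr => s hs; rewrite wt3_inH.
congr (_ - _); rewrite mulr_sumr; apply: eq_bigr => w _.
by rewrite wt3_steps mulrC.
Qed.

Lemma Sgf_denom : fps_mul (S_gf x y v) (denom x y v) = 2%:R * Rc x v.
Proof.
rewrite fps_mulE /denom fps_linE.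
set c := x + x^-1 + y * v + y^-1 * v.
have -> : S_gf x y v * (fC 2 + fC (- (2 * c)) * tX)
   = fC 2 * S_gf x y v + fC (- (2 * c)) * (tX * S_gf x y v) by ring.
rewrite -fC_nat; apply: fpsE => -[|n]; rewrite coefD !coefCM coeftM.
  by rewrite S_gf0 mulr0 addr0 /Rc mulr1.
rewrite S_gfS -/c; ring.
Qed.

End Sgf.
Lemma poly_const (R : rcfType) (p q : {poly R}) :
  (forall z : R, z != 0 -> p.[z] = q.[z^-1]) -> p = (p.[0])%:P.
Proof.
move=> hpq; set d := size q.
pose qt := \sum_(i < d) q`_i *: 'X^(d - i).
have Hqt : forall z, z != 0 -> qt.[z] = z ^+ d * q.[z^-1].
  move=> z hz; rewrite horner_sum horner_coef mulr_sumr; apply: eq_bigr => i _.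
  rewrite hornerZ hornerXn exprB ?unitfE // ?(ltnW (ltn_ord i)) //.
  by rewrite exprVn; ring.
pose r := p * 'X^d - qt.
have hr : forall z, z != 0 -> root r z.
  move=> z hz; rewrite /root /r hornerD hornerN hornerM hornerXn Hqt // hpq //.
  by rewrite mulrC subrr.
have r0 : r = 0.
  apply: (@roots_geq_poly_eq0 _ r [seq i.+1%:R | i <- iota 0 (size r)]).
  - by apply/allP => z /mapP [i _ ->]; apply: hr; rewrite pnatr_eq0.
  - rewrite map_inj_uniq ?iota_uniq // => i j /eqP; rewrite eqr_nat.
    by move/eqP => [].
  - by rewrite size_map size_iota.
have E : p * 'X^d = qt by apply/eqP; rewrite -subr_eq0 -/r r0.
apply/polyP => k; rewrite coefC; case: k => [|k] /=.
  by rewrite horner_coef0.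
have := congr1 (fun s : {poly R} => s`_(k.+1 + d)%N) E; rewrite /= coefMXn.
rewrite ltnNge leq_addl /= addnK => ->.
rewrite coef_sum big1 // => i _; rewrite coefZ coefXn.
have -> : ((k.+1 + d)%N == (d - i)%N) = false.
  apply/negbTE; rewrite neq_ltn; apply/orP; right.
  by rewrite (leq_ltn_trans (leq_subr _ _)) // addSn ltnS leq_addl.
by rewrite mulr0.
Qed.
Section Unique.
Variable R : rcfType.

Lemma fsq_unique (a b : fps R) : a * a = b * b -> 0 < a 0%N -> 0 < b 0%N -> a = b.
Proof.
move=> hab ha hb.
have hs : (a + b) 0%N * ((a + b) 0%N)^-1 = 1.
  by rewrite mulfV // coefD gt_eqF // addr_gt0.
have := finvP hs; move/unit_cancel => /(_ (a - b)).
have -> : (a - b) * (a + b) = a * a - b * b by ring.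
rewrite hab subrr => /(_ erefl) /eqP; rewrite subr_eq0 => /eqP.
done.
Qed.

Lemma sq1 (a : R) : a * a = 1 -> 0 < a -> a = 1.
Proof. move=> h1 h2; nra. Qed.

Lemma two_inv_poly : (1 *+ 2 : {poly R}) * (2^-1)%:P = 1.
Proof.
rewrite -polyC1 -polyCMn -polyCM mulr2n -mulr2n mulfV //.
by rewrite pnatr_eq0.
Qed.

Lemma two_inv : (1 *+ 2 : R) * 2^-1 = 1.
Proof. by rewrite mulfV // pnatr_eq0. Qed.

End Unique.
Section Main.
Variables (R : rcfType) (v : R) (r1 r2 : fps R).
Hypotheses (h1 : is_fps_sqrt (delta1 v) r1) (h2 : is_fps_sqrt (delta2 v) r2).

Local Notation T := (@tX R).
Definition Tv : fps R := fC v * T.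

Lemma fC2 : fC (2 : R) = 2%:R.
Proof. by rewrite fC_nat. Qed.

Lemma delta1E : delta1 v = (1 - 2%:R * (1 + fC v) * T) * (1 + 2%:R * (1 - fC v) * T).
Proof.
rewrite /delta1 fps_mulE !fps_linE ?(fC_opp, fC_mul, fC_add, fC2, fC1).
ring.
Qed.

Lemma delta2E : delta2 v = (1 - 2%:R * (1 - fC v) * T) * (1 + 2%:R * (1 + fC v) * T).
Proof.
rewrite /delta2 fps_mulE !fps_linE ?(fC_opp, fC_mul, fC_add, fC2, fC1).
ring.
Qed.

Lemma T0 : T 0%N = 0. Proof. by []. Qed.

Lemma r10 : r1 0%N = 1.
Proof.
case: h1 => hsq hpos; rewrite fps_mulE in hsq; apply: sq1 => //.
by rewrite -coefM0 hsq delta1E coefM0 !coefB !coefD !coefM0 T0 !mulr0 subr0 addr0 mulr1.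
Qed.

Lemma r20 : r2 0%N = 1.
Proof.
case: h2 => hsq hpos; rewrite fps_mulE in hsq; apply: sq1 => //.
by rewrite -coefM0 hsq delta2E coefM0 !coefB !coefD !coefM0 T0 !mulr0 subr0 addr0 mulr1.
Qed.

Definition c1 : fps R := fC 2^-1 * (1 - 2%:R * Tv + r1).
Definition c2 : fps R := fC 2^-1 * (1 + 2%:R * Tv + r2).

Lemma fChalf : fC (2^-1 : R) * 2%:R = 1.
Proof. by rewrite -fC_nat -fC_mul mulVf ?pnatr_eq0. Qed.

Lemma c1_eq : c1 * c1 - (1 - 2%:R * Tv) * c1 + T * T = 0.
Proof.
case: h1 => hsq _; rewrite fps_mulE in hsq.
have E : r1 * r1 = (1 - 2%:R * Tv) ^+ 2 - 4%:R * T * T.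
  by rewrite hsq delta1E /Tv; ring.
have -> : c1 * c1 - (1 - 2%:R * Tv) * c1 + T * T =
  fC 2^-1 * fC 2^-1 * (r1 * r1 - ((1 - 2%:R * Tv) ^+ 2 - 4%:R * T * T))
  + T * T * (1 - (fC 2^-1 * 2%:R) * (fC 2^-1 * 2%:R))
  + (fC 2^-1 * 2%:R - 1) * (fC 2^-1 * (1 - 2%:R * Tv) * ((1 - 2%:R * Tv) + r1)).
  by rewrite /c1; ring.
by rewrite E subrr fChalf mulr0 mulr1 !subrr !mulr0 mul0r !addr0.
Qed.

Lemma c2_eq : c2 * c2 - (1 + 2%:R * Tv) * c2 + T * T = 0.
Proof.
case: h2 => hsq _; rewrite fps_mulE in hsq.
have E : r2 * r2 = (1 + 2%:R * Tv) ^+ 2 - 4%:R * T * T.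
  by rewrite hsq delta2E /Tv; ring.
have -> : c2 * c2 - (1 + 2%:R * Tv) * c2 + T * T =
  fC 2^-1 * fC 2^-1 * (r2 * r2 - ((1 + 2%:R * Tv) ^+ 2 - 4%:R * T * T))
  + T * T * (1 - (fC 2^-1 * 2%:R) * (fC 2^-1 * 2%:R))
  + (fC 2^-1 * 2%:R - 1) * (fC 2^-1 * (1 + 2%:R * Tv) * ((1 + 2%:R * Tv) + r2)).
  by rewrite /c2; ring.
by rewrite E subrr fChalf mulr0 mulr1 !subrr !mulr0 mul0r !addr0.
Qed.

Lemma c10 : c1 0%N = 1.
Proof.
rewrite /c1 coefCM !coefD ?coefN r10 /Tv !coefM0 T0 !mulr0 ?oppr0 addr0 coef1f /=.
by rewrite mulrC -[1 + 1]/(1 *+ 2) two_inv.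
Qed.

Lemma c20 : c2 0%N = 1.
Proof.
rewrite /c2 coefCM !coefD r20 /Tv !coefM0 T0 !mulr0 addr0 coef1f /=.
by rewrite mulrC -[1 + 1]/(1 *+ 2) two_inv.
Qed.

Local Notation TP := (@tX {poly R}).

Definition c1i : fps R := finv c1 1.
Definition c2i : fps R := finv c2 1.
Lemma c1iP : c1 * c1i = 1. Proof. by apply: finvP; rewrite c10 mulr1. Qed.
Lemma c2iP : c2 * c2i = 1. Proof. by apply: finvP; rewrite c20 mulr1. Qed.

Definition hf (f : fps {poly R}) := fsqrt f 1 (2^-1)%:P.

Lemma hfP f : f 0%N = 1 -> hf f * hf f = f.
Proof. by move=> h; apply: fsqrtP; rewrite ?mulr1 ?h // two_inv_poly. Qed.
Lemma hf0 f : hf f 0%N = 1. Proof. exact: fsqrt0. Qed.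

Definition s1h := hf (liftP c1 - TP * fC 'X).
Definition s2h := hf (liftP c2 - TP * fC 'X).
Definition t1h := hf (1 - TP * liftP c1i * fC 'X).
Definition t2h := hf (1 - TP * liftP c2i * fC 'X).

Lemma TP0 : TP 0%N = 0. Proof. by []. Qed.

Lemma s1hP : s1h * s1h = liftP c1 - TP * fC 'X.
Proof. by apply: hfP; rewrite coefB coefM0 TP0 mul0r subr0 /liftP c10. Qed.
Lemma s2hP : s2h * s2h = liftP c2 - TP * fC 'X.
Proof. by apply: hfP; rewrite coefB coefM0 TP0 mul0r subr0 /liftP c20. Qed.
Lemma t1hP : t1h * t1h = 1 - TP * liftP c1i * fC 'X.
Proof. by apply: hfP; rewrite coefB !coefM0 TP0 !mul0r subr0. Qed.
Lemma t2hP : t2h * t2h = 1 - TP * liftP c2i * fC 'X.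
Proof. by apply: hfP; rewrite coefB !coefM0 TP0 !mul0r subr0. Qed.

Lemma ev_sq (f g : fps {poly R}) z : f * f = g -> evP f z * evP f z = evP g z.
Proof. by move=> <-; rewrite evP_mul. Qed.

Lemma ev_s1 z : evP s1h z * evP s1h z = c1 - T * fC z.
Proof.
by rewrite (ev_sq z s1hP) evP_sub evP_lift evP_mul evP_tX evP_fC hornerX.
Qed.
Lemma ev_s2 z : evP s2h z * evP s2h z = c2 - T * fC z.
Proof.
by rewrite (ev_sq z s2hP) evP_sub evP_lift evP_mul evP_tX evP_fC hornerX.
Qed.
Lemma ev_t1 z : evP t1h z * evP t1h z = 1 - T * c1i * fC z.
Proof.
by rewrite (ev_sq z t1hP) evP_sub evP_one !evP_mul evP_tX evP_lift evP_fC hornerX.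
Qed.
Lemma ev_t2 z : evP t2h z * evP t2h z = 1 - T * c2i * fC z.
Proof.
by rewrite (ev_sq z t2hP) evP_sub evP_one !evP_mul evP_tX evP_lift evP_fC hornerX.
Qed.

Lemma evP0 (f : fps {poly R}) z : f 0%N = 1 -> evP f z 0%N = 1.
Proof. by move=> h; rewrite /evP h hornerC. Qed.

Lemma pair1 z : z != 0 ->
  (c1 - T * fC z^-1) * (1 - T * c1i * fC z) = 1 - U z - 2%:R * Tv.
Proof.
move=> hz.
have e2 : fC z * fC z^-1 - 1 = 0 by rewrite -fC_mul mulfV // subrr.
have e1 : c1 * c1i - 1 = 0 by rewrite c1iP subrr.
have e3 := c1_eq.
apply/eqP; rewrite -subr_eq0; apply/eqP.
have -> : (c1 - T * fC z^-1) * (1 - T * c1i * fC z) - (1 - U z - 2%:R * Tv) =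
  - T * fC z * (c1 * c1i - 1) + T * T * c1i * (fC z * fC z^-1 - 1)
  + c1i * (c1 * c1 - (1 - 2%:R * Tv) * c1 + T * T)
  - c1 * (c1 * c1i - 1) + (1 - 2%:R * Tv) * (c1 * c1i - 1).
  by rewrite /U fC_add; ring.
by rewrite e1 e2 e3 !mulr0 !addr0 subr0.
Qed.

Lemma pair2 z : z != 0 ->
  (c2 - T * fC z^-1) * (1 - T * c2i * fC z) = 1 - U z + 2%:R * Tv.
Proof.
move=> hz.
have e2 : fC z * fC z^-1 - 1 = 0 by rewrite -fC_mul mulfV // subrr.
have e1 : c2 * c2i - 1 = 0 by rewrite c2iP subrr.
have e3 := c2_eq.
apply/eqP; rewrite -subr_eq0; apply/eqP.
have -> : (c2 - T * fC z^-1) * (1 - T * c2i * fC z) - (1 - U z + 2%:R * Tv) =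
  - T * fC z * (c2 * c2i - 1) + T * T * c2i * (fC z * fC z^-1 - 1)
  + c2i * (c2 * c2 - (1 + 2%:R * Tv) * c2 + T * T)
  - c2 * (c2 * c2i - 1) + (1 + 2%:R * Tv) * (c2 * c2i - 1).
  by rewrite /U fC_add; ring.
by rewrite e1 e2 e3 !mulr0 !addr0 subr0.
Qed.

Lemma factor z : z != 0 ->
  rho z v = evP s1h z^-1 * evP s2h z^-1 * evP t1h z * evP t2h z.
Proof.
move=> hz; apply: fsq_unique; last 2 first.
- by rewrite rho0 ltr01.
- by rewrite !coefM0 !evP0 ?hf0 // !mulr1 ltr01.
rewrite rho_sq.
have -> : evP s1h z^-1 * evP s2h z^-1 * evP t1h z * evP t2h z *
  (evP s1h z^-1 * evP s2h z^-1 * evP t1h z * evP t2h z) =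
  ((evP s1h z^-1 * evP s1h z^-1) * (evP t1h z * evP t1h z)) *
  ((evP s2h z^-1 * evP s2h z^-1) * (evP t2h z * evP t2h z)) by ring.
rewrite ev_s1 ev_s2 ev_t1 ev_t2 (pair1 hz) (pair2 hz) /Tv /V; ring.
Qed.

Definition Ph := Shat v * t1h * t2h.
Definition Qh := Rhat v * finv s1h 1 * finv s2h 1.

Lemma ev_inv (f : fps {poly R}) z : f 0%N = 1 ->
  evP f z * evP (finv f 1) z = 1.
Proof. by move=> h; rewrite -evP_mul finvP ?evP_one // h mulr1. Qed.

Lemma PQ z : z != 0 -> evP Ph z = evP Qh z^-1.
Proof.
move=> hz; rewrite /Ph /Qh !evP_mul Rhat_ev // (@Rc_rho _ z v hz) (factor hz) Shat_ev.
have ha := ev_inv z^-1 (hf0 (liftP c1 - TP * fC 'X)).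
have hb := ev_inv z^-1 (hf0 (liftP c2 - TP * fC 'X)).
rewrite -/s1h -/s2h in ha hb.
set a := evP s1h z^-1 in ha *; set b := evP s2h z^-1 in hb *.
set ai := evP (finv s1h 1) z^-1 in ha *; set bi := evP (finv s2h 1) z^-1 in hb *.
have -> : Sj z v 0 * (a * b * evP t1h z * evP t2h z) * ai * bi =
  Sj z v 0 * evP t1h z * evP t2h z * (a * ai) * (b * bi) by ring.
by rewrite ha hb !mulr1.
Qed.

Lemma Ph_const z : evP Ph z = evP Ph 0.
Proof.
have H : forall n, Ph n = ((Ph n).[0])%:P.
  move=> n; apply: poly_const (Qh n) _ => w hw.
  by have := congr1 (fun f => f n) (PQ hw).
by apply: fpsE => n; rewrite /evP (H n) !hornerC.
Qed.

Lemma evt0 (f : fps {poly R}) : hf f * hf f = f ->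
  evP f 0 = 1 -> evP (hf f) 0 = 1.
Proof.
move=> hsq h; apply: fsq_unique; last 2 first.
- by rewrite evP0 ?hf0 // ltr01.
- by rewrite ltr01.
by rewrite -evP_mul hsq h mulr1.
Qed.

Lemma Ph0 : evP Ph 0 = 1.
Proof.
rewrite /Ph !evP_mul Shat_ev0 (evt0 t1hP) ?(evt0 t2hP) ?mulr1 //.
- by rewrite evP_sub evP_one !evP_mul evP_fC hornerX fC0 mulr0 subr0.
- by rewrite evP_sub evP_one !evP_mul evP_fC hornerX fC0 mulr0 subr0.
Qed.

Lemma Rc_final x : x != 0 -> Rc x v = evP s1h x^-1 * evP s2h x^-1.
Proof.
move=> hx; rewrite (@Rc_rho _ x v hx) (factor hx).
have := Ph_const x; rewrite Ph0 /Ph !evP_mul Shat_ev => E.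
have -> : Sj x v 0 * (evP s1h x^-1 * evP s2h x^-1 * evP t1h x * evP t2h x) =
  Sj x v 0 * evP t1h x * evP t2h x * (evP s1h x^-1 * evP s2h x^-1) by ring.
by rewrite E mul1r.
Qed.

End Main.
Lemma delta10 (R : rcfType) (v : R) : delta1 v 0%N = 1.
Proof. by rewrite delta1E coefM0 !coefB !coefD !coefM0 T0 !mulr0 subr0 addr0 mulr1. Qed.
Lemma delta20 (R : rcfType) (v : R) : delta2 v 0%N = 1.
Proof. by rewrite delta2E coefM0 !coefB !coefD !coefM0 T0 !mulr0 subr0 addr0 mulr1. Qed.

Lemma sqrt_exists (R : rcfType) (f : fps R) : 0 < f 0%N ->
  exists r, is_fps_sqrt f r.
Proof.
move=> hf; set a := Num.sqrt (f 0%N).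
have ha : 0 < a by rewrite sqrtr_gt0.
exists (fsqrt f a (a *+ 2)^-1); split; last by rewrite fsqrt0.
rewrite fps_mulE fsqrtP //.
  by rewrite -expr2 sqr_sqrtr // ltW.
by rewrite mulfV // gt_eqF // pmulrn_lgt0.
Qed.

Lemma radA0 (R : rcfType) (x v : R) r1 : radA x v r1 0%N = 1 + r1 0%N.
Proof. by []. Qed.
Lemma radB0 (R : rcfType) (x v : R) r2 : radB x v r2 0%N = 1 + r2 0%N.
Proof. by []. Qed.
Theorem mainTheorem6 (R : rcfType) (x y v : R) (hx : x != 0) (hy : y != 0) :
  (exists r1 r2 r3 r4 : fps R,
      [/\ is_fps_sqrt (delta1 v) r1, is_fps_sqrt (delta2 v) r2,
          is_fps_sqrt (radA x v r1) r3 & is_fps_sqrt (radB x v r2) r4]) /\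
  (forall r1 r2 r3 r4 : fps R,
      is_fps_sqrt (delta1 v) r1 -> is_fps_sqrt (delta2 v) r2 ->
      is_fps_sqrt (radA x v r1) r3 -> is_fps_sqrt (radB x v r2) r4 ->
      fps_mul (S_gf x y v) (denom x y v) = fps_mul r3 r4).
Proof.
split.
  have [r1 hr1] : exists r, is_fps_sqrt (delta1 v) r.
    by apply: sqrt_exists; rewrite delta10 ltr01.
  have [r2 hr2] : exists r, is_fps_sqrt (delta2 v) r.
    by apply: sqrt_exists; rewrite delta20 ltr01.
  have [r3 hr3] : exists r, is_fps_sqrt (radA x v r1) r.
    by apply: sqrt_exists; rewrite radA0 (r10 hr1) addr_gt0 ?ltr01.
  have [r4 hr4] : exists r, is_fps_sqrt (radB x v r2) r.
    by apply: sqrt_exists; rewrite radB0 (r20 hr2) addr_gt0 ?ltr01.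
  by exists r1, r2, r3, r4; split.
move=> r1 r2 r3 r4 hr1 hr2 hr3 hr4.
set s := Num.sqrt (2 : R).
have hs : 0 < s by rewrite sqrtr_gt0 ltr0n.
have hss : s * s = 2 by rewrite -expr2 sqr_sqrtr ?ler0n.
set s1 := evP (s1h v r1) x^-1; set s2 := evP (s2h v r2) x^-1.
have e3 : r3 = fC s * s1.
  apply: fsq_unique; last 2 first.
  - by case: hr3.
  - by rewrite coefCM /s1 evP0 ?hf0 // mulr1.
  case: hr3 => hsq _; rewrite fps_mulE in hsq; rewrite hsq.
  have -> : fC s * s1 * (fC s * s1) = fC (s * s) * (s1 * s1) by rewrite fC_mul; ring.
  rewrite /s1 (ev_s1 hr1) hss fC2 /c1 /radA fps_addE fps_linE /Tv.
  rewrite ?(fC_opp, fC_mul, fC_add, fC2) ?fC1.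
  have E := fChalf R.
  have -> : (2 : fps R) * (fC 2^-1 * (1 - 2 * (fC v * tX) + r1) - tX * fC x^-1)
     = (fC 2^-1 * 2) * (1 - 2 * (fC v * tX) + r1) - 2 * tX * fC x^-1 by ring.
  by rewrite E mul1r; ring.
have e4 : r4 = fC s * s2.
  apply: fsq_unique; last 2 first.
  - by case: hr4.
  - by rewrite coefCM /s2 evP0 ?hf0 // mulr1.
  case: hr4 => hsq _; rewrite fps_mulE in hsq; rewrite hsq.
  have -> : fC s * s2 * (fC s * s2) = fC (s * s) * (s2 * s2) by rewrite fC_mul; ring.
  rewrite /s2 (ev_s2 hr2) hss fC2 /c2 /radB fps_addE fps_linE /Tv.
  rewrite ?(fC_opp, fC_mul, fC_add, fC2) ?fC1.
  have E := fChalf R.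
  have -> : (2 : fps R) * (fC 2^-1 * (1 + 2 * (fC v * tX) + r2) - tX * fC x^-1)
     = (fC 2^-1 * 2) * (1 + 2 * (fC v * tX) + r2) - 2 * tX * fC x^-1 by ring.
  by rewrite E mul1r; ring.
rewrite Sgf_denom // (Rc_final hr1 hr2 hx) fps_mulE e3 e4 -/s1 -/s2.
have -> : fC s * s1 * (fC s * s2) = fC (s * s) * (s1 * s2) by rewrite fC_mul; ring.
by rewrite hss fC2.
Qed.
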